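(* There exist an odd-like binary Euclidean LCD $[14,8,4]$ code and an odd-like binary Euclidean LCD $[16,10,4]$ code, and both are optimal, i.e. $4$ is the largest minimum distance among all binary Euclidean LCD $[14,8]$ codes and among all binary Euclidean LCD $[16,10]$ codes.
   Context: A binary $[n,k,d]$ code is a $k$-dimensional subspace of $\mathbb{F}_2^n$ with minimum nonzero Hamming weight $d$. It is Euclidean LCD if $C\cap C^{\perp_E}=\{0\}$, where $C^{\perp_E}$ is the dual with respect to $\langle x,y\rangle_E=\sum x_iy_i$. A binary code is odd-like if it contains a codeword $x$ with $\sum x_i=1$. An LCD $[n,k]$ code is optimal if its minimum distance is the largest among all LCD $[n,k]$ codes. *)

(* Defs.v *)
(* Binary linear codes = 'F_2-subspaces of 'rV['F_2]_n. *)
From HB Require Import structures.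
From mathcomp Require Import all_boot all_order all_algebra all_field.
Set Implicit Arguments. Unset Strict Implicit. Unset Printing Implicit Defensive.
Import GRing.Theory.
Local Open Scope ring_scope.

Definition wt n (x : 'rV['F_2]_n) : nat := #|[set i | x 0 i != 0]|.

Definition edot n (x y : 'rV['F_2]_n) : 'F_2 := \sum_i x 0 i * y 0 i.

Definition is_LCD n (C : {vspace 'rV['F_2]_n}) : Prop :=
  forall x, x \in C -> (forall y, y \in C -> edot x y = 0) -> x = 0.

Definition min_dist n (C : {vspace 'rV['F_2]_n}) (d : nat) : Prop :=
  (exists x, [/\ x \in C, x != 0 & wt x = d]) /\
  (forall x, x \in C -> x != 0 -> (d <= wt x)%N).

Definition is_code n k d (C : {vspace 'rV['F_2]_n}) : Prop :=
  \dim C = k /\ min_dist C d.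

Definition odd_like n (C : {vspace 'rV['F_2]_n}) : Prop :=
  exists x, x \in C /\ \sum_i x 0 i = 1.

(* Main.v *)
Require Import Defs.
From mathcomp Require Import all_boot all_order all_algebra all_field.
Set Implicit Arguments. Unset Strict Implicit. Unset Printing Implicit Defensive.
Import GRing.Theory.
Local Open Scope ring_scope.

Lemma F2_cases (a : 'F_2) : a = (a != 0)%:R.
Proof. case: a => -[|[|m]] Hm; apply/val_inj => //. Qed.
Lemma F2_add (a b : bool) : (a%:R + b%:R : 'F_2) = (a (+) b)%:R.
Proof. by case: a; case: b; apply/val_inj. Qed.
Lemma F2_mul (a b : bool) : (a%:R * b%:R : 'F_2) = (a && b)%:R.
Proof. by case: a; case: b; rewrite ?mul1r ?mul0r. Qed.
Lemma F2_neq0 (a : bool) : ((a%:R : 'F_2) != 0) = a.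
Proof. by case: a. Qed.
Lemma F2_inj (a b : bool) : (a%:R : 'F_2) = b%:R -> a = b.
Proof. by move/(congr1 (fun x => x != 0)); rewrite !F2_neq0. Qed.

Fixpoint xsum (F : nat -> bool) m := if m is m'.+1 then xsum F m' (+) F m' else false.
Fixpoint wcount (F : nat -> bool) m : nat :=
  if m is m'.+1 then (wcount F m' + F m')%N else 0%N.

Lemma sumF2 (F : nat -> bool) m : \sum_(i < m) ((F i)%:R : 'F_2) = (xsum F m)%:R.
Proof.
elim: m => [|m IH]; first by rewrite big_ord0.
by rewrite big_ord_recr /= IH F2_add.
Qed.

Lemma sumcount (F : nat -> bool) m :
  (\sum_(j < m) (if F j then 1 else 0) = wcount F m)%N.
Proof.
elim: m => [|m IH]; first by rewrite big_ord0.
by rewrite big_ord_recr /= IH; case: (F m).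
Qed.

Lemma cardF (F : nat -> bool) m : #|[set j : 'I_m | F j]| = wcount F m.
Proof.
rewrite -sum1_card big_mkcond /= -sumcount.
by apply: eq_bigr => i _; rewrite inE.
Qed.

Definition gentry (tbl : seq (seq bool)) i j := nth false (nth [::] tbl i) j.
Definition genv n tbl i : 'rV['F_2]_n := \row_j (gentry tbl i j)%:R.
Definition gens n k tbl : k.-tuple 'rV['F_2]_n := [tuple genv n tbl i | i < k].
Definition code n k tbl : {vspace 'rV['F_2]_n} := <<gens n k tbl>>%VS.
Definition cwj tbl k (bs : seq bool) j :=
  xsum (fun i => nth false bs i && gentry tbl i j) k.
Definition bitsOf k (c : 'I_k -> 'F_2) := [seq c i != 0 | i <- enum 'I_k].

Lemma gens_nth n k tbl (i : 'I_k) : (gens n k tbl)`_i = genv n tbl i.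
Proof. by rewrite -tnth_nth tnth_mktuple. Qed.

Lemma bitsOf_nth k c (i : 'I_k) : nth false (bitsOf c) i = (c i != 0).
Proof. by rewrite /bitsOf (nth_map i) ?size_enum_ord // nth_ord_enum. Qed.

Lemma size_bitsOf k (c : 'I_k -> 'F_2) : size (bitsOf c) = k.
Proof. by rewrite size_map size_enum_ord. Qed.

Lemma comb_entry n k tbl (c : 'I_k -> 'F_2) j :
  (\sum_(i < k) c i *: (gens n k tbl)`_i) 0 j = (cwj tbl k (bitsOf c) j)%:R.
Proof.
rewrite summxE /cwj -sumF2; apply: eq_bigr => i _.
rewrite gens_nth !mxE bitsOf_nth {1}(F2_cases (c i)) F2_mul.
by [].
Qed.

Lemma wt_bits n (F : nat -> bool) (x : 'rV['F_2]_n) :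
  (forall j : 'I_n, x 0 j = (F j)%:R) -> wt x = wcount F n.
Proof.
move=> Hx; rewrite /wt -cardF; apply: eq_card => j.
by rewrite !inE Hx F2_neq0.
Qed.

Lemma wt0 n : wt (0 : 'rV['F_2]_n) = 0%N.
Proof.
rewrite /wt; apply/eqP; rewrite cards_eq0; apply/eqP/setP => j.
by rewrite !inE mxE eqxx.
Qed.

Fixpoint allbits k : seq (seq bool) :=
  if k is k'.+1 then [seq b :: s | b <- [:: false; true], s <- allbits k']
  else [:: [::]].

Lemma allbitsP k bs : size bs = k -> bs \in allbits k.
Proof.
elim: k bs => [|k IH] [|b s] //=.
case=> /IH Hs.
have := @allpairs_f _ _ _ (fun b s => b :: s) [:: false; true] (allbits k) b s.
by apply; rewrite // inE; case: b.
Qed.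

Definition check_md n k tbl :=
  all (fun bs => ~~ has id bs || (4 <= wcount (cwj tbl k bs) n)%N) (allbits k).
Definition check_lcd n k tbl :=
  all (fun bs => ~~ has id bs ||
     has (fun i => xsum (fun j => cwj tbl k bs j && gentry tbl i j) n) (iota 0 k))
    (allbits k).

Lemma genv_mem n k tbl (i : 'I_k) : genv n tbl i \in code n k tbl.
Proof. by rewrite -gens_nth; apply: memv_span; apply: mem_nth; rewrite size_tuple. Qed.

Lemma nobits_zero k (c : 'I_k -> 'F_2) : ~~ has id (bitsOf c) -> forall i, c i = 0.
Proof.
move=> H i; case: (eqVneq (c i) 0) => // Hc; exfalso; move/negP: H; apply.
apply/hasP; exists (c i != 0) => //.
by apply/mapP; exists i; rewrite ?mem_enum.
Qed.

Lemma code_good n k tbl i0 i1 :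
  check_md n k tbl -> check_lcd n k tbl ->
  (i0 < k)%N -> wcount (gentry tbl i0) n = 4%N ->
  (i1 < k)%N -> xsum (gentry tbl i1) n ->
  [/\ is_code k 4 (code n k tbl), is_LCD (code n k tbl) & odd_like (code n k tbl)].
Proof.
move=> Hmd Hlcd Hi0 Hw0 Hi1 Hx1.
set X := gens n k tbl.
have comb c : wt (\sum_(i < k) c i *: X`_i) = wcount (cwj tbl k (bitsOf c)) n.
  by apply: wt_bits => j; rewrite comb_entry.
have zero_or c : ~~ has id (bitsOf c) -> \sum_(i < k) c i *: X`_i = 0.
  by move=> H; apply: big1 => i _; rewrite (nobits_zero H) scale0r.
have memC x : x \in code n k tbl -> exists c : 'I_k -> 'F_2, x = \sum_(i < k) c i *: X`_i.
  by move=> Hx; exists (fun i => coord X i x); apply: coord_span.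
have Hfree : free X.
  apply/freeP => c H i.
  case/orP: (allP Hmd _ (allbitsP (size_bitsOf c))) => [H'|H'].
    exact: nobits_zero.
  by move: H'; rewrite -comb H wt0.
split.
- split; first by move/eqP: Hfree; rewrite size_tuple.
  split.
    exists (genv n tbl (Ordinal Hi0)); split; first exact: genv_mem.
      apply/eqP => H0.
      have : wt (genv n tbl (Ordinal Hi0)) = 4%N.
        by rewrite -Hw0; apply: wt_bits => j; rewrite mxE.
      by rewrite H0 wt0.
    by rewrite -Hw0; apply: wt_bits => j; rewrite mxE.
  move=> x /memC [c ->] Hnz.
  case/orP: (allP Hmd _ (allbitsP (size_bitsOf c))) => [H'|H'].
    by rewrite zero_or ?eqxx in Hnz.
  by rewrite comb.
- move=> x /memC [c Ex] Horth.
  case/orP: (allP Hlcd _ (allbitsP (size_bitsOf c))) => [H'|/hasP [i Hi Hx]].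
    by rewrite Ex zero_or.
  exfalso.
  have Hi' : (i < k)%N by move: Hi; rewrite mem_iota add0n.
  have := Horth _ (genv_mem n tbl (Ordinal Hi')).
  rewrite /edot (eq_bigr (fun j : 'I_n => ((cwj tbl k (bitsOf c) j && gentry tbl i j)%:R))).
    by rewrite (sumF2 (fun j => cwj tbl k (bitsOf c) j && gentry tbl i j)) Hx.
  by move=> j _; rewrite Ex comb_entry !mxE F2_mul.
- exists (genv n tbl (Ordinal Hi1)); split; first exact: genv_mem.
  rewrite (eq_bigr (fun j : 'I_n => ((gentry tbl i1 j)%:R))).
    by rewrite (sumF2 (gentry tbl i1)) Hx1.
  by move=> j _; rewrite mxE.
Qed.

Definition ind n (A : {set 'I_n}) : 'rV['F_2]_n := \row_l (l \in A)%:R.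

Lemma wtB n (x y : 'rV['F_2]_n) : (wt (x - y) <= wt x + wt y)%N.
Proof.
rewrite /wt; apply: leq_trans (leq_card_setU _ _).
apply: subset_leq_card; apply/subsetP => i; rewrite !inE !mxE.
apply: contraR; rewrite negb_or !negbK => /andP[/eqP-> /eqP->].
by rewrite subr0.
Qed.

Lemma wt_ind n (A : {set 'I_n}) : wt (ind A) = #|A|.
Proof. by rewrite /wt; apply: eq_card => i; rewrite !inE mxE F2_neq0. Qed.

Lemma hamming n m k (C : {vspace 'rV['F_2]_n}) d :
  n = (m + k)%N -> (2 ^ m < 'C(n, 2))%N -> \dim C = k -> min_dist C d -> (d <= 4)%N.
Proof.
move=> En Hm Hdim [_ Hd]; rewrite leqNgt; apply/negP => Hd4.
pose P := [set A : {set 'I_n} | #|A| == 2%N].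
pose Cs := [set x : 'rV['F_2]_n | x \in C].
pose f := fun p : {set 'I_n} * 'rV['F_2]_n => ind p.1 + p.2.
have inj : {in setX P Cs &, injective f}.
  move=> [A1 c1] [A2 c2]; rewrite !inE /= => /andP[/eqP hA1 hc1] /andP[/eqP hA2 hc2].
  rewrite /f /= => E.
  have Ez : ind A1 - ind A2 = c2 - c1.
    by rewrite -[ind A1](addrK c1) E addrC !addrA addNr add0r.
  case: (eqVneq (c2 - c1) 0) => [Hz|Hnz].
    have Hc := subr0_eq Hz.
    have HA : ind A1 = ind A2 by apply: subr0_eq; rewrite Ez.
    have -> : A1 = A2.
      apply/setP => l; have := congr1 (fun v : 'rV_n => v 0 l) HA.
      by rewrite /= !mxE => /F2_inj.
    by rewrite Hc.
  exfalso.
  have Hmem : c2 - c1 \in C by apply: memvB.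
  have := Hd _ Hmem Hnz; rewrite -Ez => Hle.
  have := leq_trans (wtB _ _) (leqnn _) : (wt (ind A1 - ind A2) <= wt (ind A1) + wt (ind A2))%N.
  rewrite !wt_ind hA1 hA2 => H4.
  by have := leq_trans Hd4 (leq_trans Hle H4).
have := card_in_imset inj; rewrite cardsX.
have Hle : (#|f @: setX P Cs| <= 2 ^ n)%N.
  by apply: leq_trans (max_card _) _; rewrite card_mx card_Fp // mul1n.
have -> : #|P| = 'C(n, 2) by rewrite card_draws card_ord.
have -> : #|Cs| = (2 ^ k)%N by rewrite cardsE card_vspace card_Fp // Hdim.
have E2 : (2 ^ n = 2 ^ m * 2 ^ k)%N by rewrite En expnD.
move=> Heq; move: Hle; rewrite Heq E2 leq_pmul2r ?expn_gt0 //.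
by rewrite leqNgt Hm.
Qed.

Definition tbl14 : seq (seq bool) := Eval compute in map (map (fun b : nat => b == 1%N))
 [:: [:: 1; 0; 0; 0; 0; 0; 0; 0; 1; 0; 1; 1; 0; 1]; [:: 0; 1; 0; 0; 0; 0; 0; 0; 1; 1; 0; 1; 0; 0]; [:: 0; 0; 1; 0; 0; 0; 0; 0; 1; 0; 0; 1; 1; 1]; [:: 0; 0; 0; 1; 0; 0; 0; 0; 1; 0; 1; 0; 1; 0]; [:: 0; 0; 0; 0; 1; 0; 0; 0; 1; 1; 0; 0; 1; 0]; [:: 0; 0; 0; 0; 0; 1; 0; 0; 1; 1; 1; 1; 1; 0]; [:: 0; 0; 0; 0; 0; 0; 1; 0; 0; 1; 1; 1; 0; 1]; [:: 0; 0; 0; 0; 0; 0; 0; 1; 0; 0; 1; 0; 1; 1]]%N.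
Definition tbl16 : seq (seq bool) := Eval compute in map (map (fun b : nat => b == 1%N))
 [:: [:: 1; 0; 0; 0; 0; 0; 0; 0; 0; 0; 0; 1; 1; 1; 1; 0]; [:: 0; 1; 0; 0; 0; 0; 0; 0; 0; 0; 1; 0; 1; 1; 0; 1]; [:: 0; 0; 1; 0; 0; 0; 0; 0; 0; 0; 1; 1; 0; 0; 0; 1]; [:: 0; 0; 0; 1; 0; 0; 0; 0; 0; 0; 1; 1; 0; 0; 1; 0]; [:: 0; 0; 0; 0; 1; 0; 0; 0; 0; 0; 0; 1; 0; 1; 0; 1]; [:: 0; 0; 0; 0; 0; 1; 0; 0; 0; 0; 1; 0; 0; 0; 1; 1]; [:: 0; 0; 0; 0; 0; 0; 1; 0; 0; 0; 1; 0; 0; 1; 1; 0]; [:: 0; 0; 0; 0; 0; 0; 0; 1; 0; 0; 0; 1; 1; 0; 0; 1]; [:: 0; 0; 0; 0; 0; 0; 0; 0; 1; 0; 1; 0; 1; 0; 1; 0]; [:: 0; 0; 0; 0; 0; 0; 0; 0; 0; 1; 1; 1; 1; 1; 0; 0]]%N.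

Lemma md14 : check_md 14 8 tbl14. Proof. by vm_compute. Qed.
Lemma lcd14 : check_lcd 14 8 tbl14. Proof. by vm_compute. Qed.
Lemma md16 : check_md 16 10 tbl16. Proof. by vm_compute. Qed.
Lemma lcd16 : check_lcd 16 10 tbl16. Proof. by vm_compute. Qed.

Theorem proposition3p8 :
  ((exists C : {vspace 'rV['F_2]_14}, [/\ is_code 8%N 4%N C, is_LCD C & odd_like C]) /\
   (forall (C : {vspace 'rV['F_2]_14}) (d : nat), is_code 8%N d C -> is_LCD C -> (d <= 4)%N)) /\
  ((exists C : {vspace 'rV['F_2]_16}, [/\ is_code 10%N 4%N C, is_LCD C & odd_like C]) /\
   (forall (C : {vspace 'rV['F_2]_16}) (d : nat), is_code 10%N d C -> is_LCD C -> (d <= 4)%N)).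
Proof.
split; split.
- exists (code 14 8 tbl14).
  by apply: (@code_good _ _ _ 1 0); vm_compute.
- by move=> C d [Hdim Hmd] _; apply: (@hamming 14 6 8 C d).
- exists (code 16 10 tbl16).
  by apply: (@code_good _ _ _ 2 0); vm_compute.
- by move=> C d [Hdim Hmd] _; apply: (@hamming 16 6 10 C d).
Qed.
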